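(* Let $G$ be a dense $G_\delta$ subset of $2^\omega$, and let $T$ be the tree generated by a test. Then there are $\alpha_0\in G$ and a continuous map $f:2^\omega\to G$ such that for each $\alpha\in 2^\omega$: (a) $(\alpha_0,f(\alpha))\in[T]$; (b) for each $t\in\omega^{<\omega}$ and each $m\in\omega$: (i) if $\alpha(p(tm))=1$, then there is $m'\in\omega$ with $(\alpha_0\,\Delta\,f(\alpha))(p(tm')+1)=1$; (ii) if $(\alpha_0\,\Delta\,f(\alpha))(p(tm)+1)=1$, then there is $m'\in\omega$ with $\alpha(p(tm'))=1$.
   Context: Let $\varphi:\omega\to\omega^2$ be the bijection with inverse $\langle n,p\rangle:=\varphi^{-1}(n,p)=\left(\sum_{k\leq n+p}k\right)+p$, and write $\varphi(q)=((q)_0,(q)_1)$. A set $E\subseteq\bigcup_{q}2^q\times 2^q$ is a test if: (a) for each $q$ there is a unique $(s_q,t_q)\in E\cap(2^q\times 2^q)$; (b) for all $m,p\in\omega$ and $u\in 2^{<\omega}$ there is $v\in 2^{<\omega}$ with $(s_p0uv,t_p1uv)\in E$ and $(|t_p1uv|-1)_0=m$; (c) for each $n>0$ there are $q<n$ and $w\in 2^{<\omega}$ with $s_n=s_q0w$, $t_n=t_q1w$. The tree generated by $E$ is $T:=\{(s,t): s=t=\emptyset$ or $\exists q\ \exists w\in 2^{<\omega}\ (s,t)=(s_q0w,t_q1w)\}$, and $[T]$ is the set of $(\alpha,\beta)\in 2^\omega\times2^\omega$ with $(\alpha\upharpoonright r,\beta\upharpoonright r)\in T$ for all $r$. The map $p:\omega^{<\omega}\setminus\{\emptyset\}\to\omega$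 is defined by $p(s):=s(0)$ if $|s|=1$ and $p(s):=\langle p(s\upharpoonright(|s|-1)),s(|s|-1)\rangle$ otherwise; $tm$ denotes the sequence $t$ followed by $m$. $\alpha\,\Delta\,\beta\in 2^\omega$ is the symmetric difference: $(\alpha\,\Delta\,\beta)(k)=1$ iff $\alpha(k)\neq\beta(k)$. *)

(* Defs.v *)
From mathcomp Require Import all_boot.
Set Implicit Arguments. Unset Strict Implicit. Unset Printing Implicit Defensive.

Definition cantor := nat -> bool.

Definition restr (a : cantor) (r : nat) : seq bool := mkseq a r.

(* Topology of 2^omega (product topology), written out on basic clopen sets [s]. *)
Definition agree (a b : cantor) (r : nat) : Prop := forall i, i < r -> a i = b i.

Definition open_set (U : cantor -> Prop) : Prop :=
  forall a, U a -> exists r, forall b, agree a b r -> U b.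

Definition dense (D : cantor -> Prop) : Prop :=
  forall s : seq bool, exists a, D a /\ restr a (size s) = s.

Definition Gdelta (G : cantor -> Prop) : Prop :=
  exists U : nat -> cantor -> Prop,
    (forall n, open_set (U n)) /\ (forall a, G a <-> forall n, U n a).

Definition continuous_map (f : cantor -> cantor) : Prop :=
  forall a n, exists r, forall b, agree a b r -> agree (f a) (f b) n.

Definition pair (n p : nat) : nat := \sum_(k < (n + p).+1) k + p.

Fixpoint phi (q : nat) : nat * nat :=
  match q with
  | 0 => (0, 0)
  | q'.+1 => let: (n, p) := phi q' in
             if n is n'.+1 then (n', p.+1) else (p.+1, 0)
  end.

Lemma pair_phi q : pair (phi q).1 (phi q).2 = q.
Proof.
elim: q => [|q IH] /=; first by rewrite /pair big_ord_recr big_ord0.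
move: IH; case: (phi q) => n p /=; case: n => [|n] /= <-.
  rewrite /pair !add0n addn0 big_ord_recr /=. by rewrite !addn0 addnS.
by rewrite /pair addnS addSn !addnS.
Qed.

Definition phi0 (q : nat) : nat := (phi q).1.

(* p : omega^{<omega} \ {empty} -> omega; p(s) = s(0) if |s| = 1, and
   p(s) = <p(s restricted to |s|-1), last s> otherwise.
   (Value on the empty sequence is irrelevant; it is only applied to tm.) *)
Definition pcode (s : seq nat) : nat :=
  match s with
  | [::] => 0
  | h :: r => foldl pair h r
  end.

(* A test, given by its enumeration q |-> (s_q, t_q); E = {(s_q,t_q) | q}. *)
Definition is_test (s t : nat -> seq bool) : Prop :=
  (forall q, size (s q) = q /\ size (t q) = q) /\
  (forall (m p : nat) (u : seq bool), exists v : seq bool,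
      exists q, s q = s p ++ false :: u ++ v /\ t q = t p ++ true :: u ++ v /\
                phi0 (size (t p ++ true :: u ++ v) - 1) = m) /\
  (forall n, 0 < n -> exists q, exists w : seq bool,
      q < n /\ s n = s q ++ false :: w /\ t n = t q ++ true :: w).

Definition in_tree (s t : nat -> seq bool) (x y : seq bool) : Prop :=
  (x = [::] /\ y = [::]) \/
  exists q, exists w : seq bool, x = s q ++ false :: w /\ y = t q ++ true :: w.

Definition in_body (s t : nat -> seq bool) (a b : cantor) : Prop :=
  forall r, in_tree s t (restr a r) (restr b r).

Definition symdiff (a b : cantor) : cantor := fun k => a k != b k.

(* Main.v *)
Require Import Defs.
From mathcomp Require Import all_boot.
From mathcomp Require Import zify.
From Stdlib Require Import ClassicalEpsilon.

Lemma pairS n p : pair n p.+1 = (pair n.+1 p).+1.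
Proof. by rewrite /pair !addnS addSn. Qed.

Lemma pair0S p : pair p.+1 0 = (pair 0 p).+1.
Proof. by rewrite /pair !addn0 add0n big_ord_recr /= addnS. Qed.

Lemma phi_pair n p : phi (pair n p) = (n, p).
Proof.
have H : forall d p, p <= d -> phi (pair (d - p) p) = (d - p, p).
  elim=> [|d IHd] p0.
    by rewrite leqn0 => /eqP->; rewrite /pair big_ord_recr big_ord0.
  elim: p0 => [|p0 IHp] Hp.
    rewrite subn0 pair0S /=.
    by have := IHd d (leqnn d); rewrite subnn => ->.
  have Hp' : p0 <= d.+1 by apply: ltnW.
  have E : d.+1 - p0 = (d.+1 - p0.+1).+1 by rewrite subnS prednK // subn_gt0.
  rewrite pairS -E /= IHp //=.
  by rewrite E.
have := H (n + p) p (leq_addl _ _).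
by rewrite addnK.
Qed.

Lemma phi0_pair n p : phi0 (pair n p) = n.
Proof. by rewrite /phi0 phi_pair. Qed.

Lemma pair_phi' q : pair (phi0 q) (phi q).2 = q.
Proof. exact: pair_phi. Qed.

Lemma pcode_rcons h r m : pcode (rcons (h :: r) m) = pair (pcode (h :: r)) m.
Proof. by rewrite /= -cats1 foldl_cat. Qed.

Lemma chain_nth (C : nat -> seq bool) :
  (forall k, exists w, C k.+1 = C k ++ w) -> (forall k, k < size (C k)) ->
  forall K x, x < size (C K) -> nth false (C K) x = nth false (C x) x.
Proof.
move=> Hs Hz.
have mono : forall i j, i <= j -> exists w, C j = C i ++ w.
  move=> i j /subnK <-; elim: (j - i) => [|d [w Hw]]; first by exists [::]; rewrite cats0.
  have [w' ->] := Hs (d + i); exists (w ++ w'); by rewrite Hw catA.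
move=> K x Hx; case: (leqP x K) => H.
  have [w ->] := mono _ _ H; by rewrite nth_cat Hz.
have [w ->] := mono _ _ (ltnW H); by rewrite nth_cat Hx.
Qed.

Lemma chain_restr (C : nat -> seq bool) :
  (forall k, exists w, C k.+1 = C k ++ w) -> (forall k, k < size (C k)) ->
  forall K r, r <= size (C K) -> restr (fun x => nth false (C x) x) r = take r (C K).
Proof.
move=> Hs Hz K r Hr.
apply: (@eq_from_nth _ false); first by rewrite size_mkseq size_take; case: ltnP Hr => // H1 H2; apply/eqP; rewrite eqn_leq H2.
move=> i; rewrite size_mkseq => Hi.
rewrite nth_mkseq // nth_take //. symmetry; apply: chain_nth => //. exact: leq_trans Hi Hr.
Qed.

Lemma tree_take (s t : nat -> seq bool) :
  (forall q, size (s q) = q /\ size (t q) = q) ->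
  (forall n, 0 < n -> exists q, exists w : seq bool,
      q < n /\ s n = s q ++ false :: w /\ t n = t q ++ true :: w) ->
  forall q w r, in_tree s t (take r (s q ++ false :: w)) (take r (t q ++ true :: w)).
Proof.
move=> Hsz Hc q; elim: q {-2}q (leqnn q) => [|n IH] q Hq w r.
  move: Hq; rewrite leqn0 => /eqP ->.
  case: r => [|r]; first by left; rewrite !take0.
  right; exists 0, (take r w); by rewrite (size0nil (Hsz 0).1) (size0nil (Hsz 0).2).
case: (ltnP q r) => Hr.
  right; exists q, (take (r - q).-1 w).
  have [E1 E2] := Hsz q.
  rewrite !take_cat E1 E2 ltnNge (ltnW Hr) /=.
  case E : (r - q) => [|d]; first by move: Hr; rewrite -subn_gt0 E.
  by [].
case: r Hr => [|r] Hr; first by left; rewrite !take0.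
have Hq0 : 0 < q by apply: leq_ltn_trans Hr.
have [q' [w' [Hq' [E1 E2]]]] := Hc q Hq0.
have [S1 S2] := Hsz q.
rewrite !takel_cat ?S1 ?S2 // E1 E2.
by apply: IH; rewrite -ltnS (leq_trans Hq').
Qed.


Record prm := Prm { ps : nat -> seq bool; pt : nat -> seq bool;
  VF : nat -> nat -> seq bool -> seq bool; QF : nat -> nat -> seq bool -> nat;
  EX : nat -> seq bool -> seq bool }.

Record st := St { sg : seq bool; nd : nat -> nat; dp : nat -> nat }.

Definition S1 (P : prm) (i : nat) (S : st) : seq bool * nat :=
  let p := i./2 in let Np := nd S p in let row := phi0 (dp S p) in
  let u := drop Np.+1 (sg S) in
  if odd i then (sg S ++ VF P row Np u ++ [:: false], QF P row Np u)
  else (sg S ++ [:: false], Np).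

Definition S2 (P : prm) (i : nat) (S : st) : seq bool :=
  (S1 P i S).1 ++ EX P i.+1 (S1 P i S).1.

Definition FP (P : prm) (i : nat) (S : st) : seq bool :=
  pt P (S1 P i S).2 ++ true :: drop (S1 P i S).2.+1 (S2 P i S).

Definition step (P : prm) (i : nat) (S : st) : st :=
  St (S2 P i S ++ EX P i.+1 (FP P i S))
     (fun x => if x == i.+1 then (S1 P i S).2 else nd S x)
     (fun x => if x == i.+1 then (dp S i./2).+1 else dp S x).

Fixpoint build (P : prm) (n : nat) : st :=
  match n with 0 => St [:: false] (fun _ => 0) (fun _ => 0)
  | i.+1 => step P i (build P i) end.

Definition Sg P n := sg (build P n).
Definition Nd P x := nd (build P x) x.
Definition Dp P x := dp (build P x) x.
Definition Pf P x := pt P (Nd P x) ++ true :: drop (Nd P x).+1 (Sg P x).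

Fixpoint idx (a : cantor) (k : nat) : nat :=
  match k with 0 => 0 | k.+1 => (a k + (idx a k).*2).+1 end.

Lemma stable P i x : x <= i -> nd (build P i) x = Nd P x /\ dp (build P i) x = Dp P x.
Proof.
elim: i => [|i IH]; first by rewrite leqn0 => /eqP ->.
rewrite leq_eqVlt => /orP [/eqP -> //|Hx].
rewrite /= /step /=. have := Hx; rewrite ltn_neqAle => /andP [/negbTE -> _]. exact: IH.
Qed.

Lemma Nd_succ P i : Nd P i.+1 = (S1 P i (build P i)).2.
Proof. by rewrite /Nd /= eqxx. Qed.

Lemma half_le i : i./2 <= i.
Proof. by rewrite leq_half_double -addnn leqW // leq_addr. Qed.

Lemma Dp_succ P i : Dp P i.+1 = (Dp P i./2).+1.
Proof. rewrite /Dp /= eqxx. by rewrite (stable P _ _ (half_le i)).2. Qed.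

Definition good (P : prm) :=
  (forall q, size (ps P q) = q /\ size (pt P q) = q) /\
  (forall m p u, ps P (QF P m p u) = ps P p ++ false :: u ++ VF P m p u /\
                 pt P (QF P m p u) = pt P p ++ true :: u ++ VF P m p u /\
                 phi0 (QF P m p u).-1 = m).

Lemma dropS_cat (x y : seq bool) b n : size x = n -> drop n.+1 (x ++ b :: y) = y.
Proof. by move=> H; rewrite -cat_rcons drop_size_cat // size_rcons H. Qed.

Lemma takeS_cat (x y : seq bool) b n : size x = n -> take n.+1 (x ++ b :: y) = x ++ [:: b].
Proof. by move=> H; rewrite -cat_rcons take_size_cat ?cats1 // size_rcons H. Qed.

Lemma S1_eq P i : S1 P i (build P i) =
  let N := Nd P i./2 in let row := phi0 (Dp P i./2) in let u := drop N.+1 (Sg P i) in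
  if odd i then (Sg P i ++ VF P row N u ++ [:: false], QF P row N u)
  else (Sg P i ++ [:: false], N).
Proof.
rewrite /S1; have [-> ->] := stable P _ _ (half_le i). by [].
Qed.

Lemma Sg_succ P i : Sg P i.+1 = S2 P i (build P i) ++ EX P i.+1 (FP P i (build P i)).
Proof. by []. Qed.

Lemma Sg_ext P i : exists w, Sg P i.+1 = Sg P i ++ w.
Proof.
rewrite Sg_succ /S2 S1_eq /=. case: (odd i) => /=.
  by eexists; rewrite -!catA.
by eexists; rewrite -!catA.
Qed.

Lemma Sg_size P i : i < size (Sg P i).
Proof.
elim: i => [//|i IH]. rewrite Sg_succ /S2 S1_eq /=.
case: (odd i); rewrite /= !size_cat ?size_cat /=; lia.
Qed.

Lemma Sg_mono P i j : i <= j -> exists w, Sg P j = Sg P i ++ w.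
Proof.
move=> /subnK <-; elim: (j - i) => [|d [w Hw]]; first by exists [::]; rewrite cats0.
have [w' ->] := Sg_ext P (d + i); exists (w ++ w'); by rewrite Hw catA.
Qed.

Lemma Kinv P : good P -> forall x, exists w, Sg P x = ps P (Nd P x) ++ false :: w.
Proof.
move=> [Hsz HQ]; elim/ltn_ind => [[|i]] IH.
  by exists [::]; rewrite /Sg /Nd /= (size0nil (Hsz 0).1).
have [w Hw] := IH _ (leq_ltn_trans (half_le i) (ltnSn i)).
have [w' Hw'] := Sg_mono P _ _ (half_le i).
rewrite Sg_succ /S2 Nd_succ S1_eq /=.
case: (odd i) => /=.
  have [E1 _] := HQ (phi0 (Dp P i./2)) (Nd P i./2) (drop (Nd P i./2).+1 (Sg P i)).
  set u := drop (Nd P i./2).+1 (Sg P i).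
  have Hu : Sg P i = ps P (Nd P i./2) ++ false :: u.
    rewrite /u Hw' Hw -catA /= dropS_cat ?(Hsz _).1 //.
  rewrite E1 {1}Hu; eexists; rewrite -!catA /= -?catA /=; reflexivity.
rewrite Hw' Hw; eexists; rewrite -!catA /= -?catA /=; reflexivity.
Qed.

Lemma K1 P : good P -> forall i, exists w,
  (S1 P i (build P i)).1 = ps P (Nd P i.+1) ++ false :: w.
Proof.
move=> G i; have [Hsz HQ] := G.
have [w Hw] := Kinv P G i./2.
have [w' Hw'] := Sg_mono P _ _ (half_le i).
rewrite Nd_succ S1_eq /=.
case: (odd i) => /=.
  have [E1 _] := HQ (phi0 (Dp P i./2)) (Nd P i./2) (drop (Nd P i./2).+1 (Sg P i)).
  set u := drop (Nd P i./2).+1 (Sg P i).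
  have Hu : Sg P i = ps P (Nd P i./2) ++ false :: u.
    rewrite /u Hw' Hw -catA /= dropS_cat ?(Hsz _).1 //.
  rewrite E1 {1}Hu; eexists; rewrite -!catA /= -?catA /=; reflexivity.
rewrite Hw' Hw; eexists; rewrite -!catA /= -?catA /=; reflexivity.
Qed.

Lemma Nd_lt P : good P -> forall x, Nd P x < size (Sg P x).
Proof.
move=> G x; have [w ->] := Kinv P G x. by rewrite size_cat (G.1 _).1 /= addnS ltnS leq_addr.
Qed.

Lemma Pf_size P : good P -> forall x, size (Pf P x) = size (Sg P x).
Proof.
move=> G x; have [w Hw] := Kinv P G x.
by rewrite /Pf Hw dropS_cat ?(G.1 _).1 // !size_cat /= (G.1 _).1 (G.1 _).2.
Qed.

Lemma Pf_ext P : good P -> forall i, exists w, Pf P i.+1 = Pf P i./2 ++ w.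
Proof.
move=> G i; have [Hsz HQ] := G.
have [w Hw] := Kinv P G i./2.
have [w' Hw'] := Sg_mono P _ _ (half_le i).
have [z Hz] : exists z, Sg P i.+1 = (S1 P i (build P i)).1 ++ z.
  by rewrite Sg_succ /S2; eexists; rewrite -catA.
have Hp : Pf P i./2 = pt P (Nd P i./2) ++ true :: w by rewrite /Pf Hw dropS_cat ?(Hsz _).1.
rewrite Hp /Pf Hz Nd_succ S1_eq /=.
have Hu : drop (Nd P i./2).+1 (Sg P i) = w ++ w'.
  by rewrite Hw' Hw -catA /= dropS_cat ?(Hsz _).1.
case: (odd i) => /=.
  have [E1 [E2 _]] := HQ (phi0 (Dp P i./2)) (Nd P i./2) (drop (Nd P i./2).+1 (Sg P i)).
  move: E1 E2.
  set q := QF _ _ _ _; set v := VF _ _ _ _ => E1 E2.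
  have Hs : size (Sg P i ++ v) = q.
    have := (Hsz q).1; rewrite E1 Hu Hw' Hw -!catA /= => <-.
    by rewrite !size_cat /=.
  rewrite E2 Hu.
  eexists; rewrite -!catA /= -?catA /= -?catA; reflexivity.
rewrite Hw' Hw -!catA /= dropS_cat ?(Hsz _).1 //.
eexists; rewrite -!catA /= -?catA /=; reflexivity.
Qed.

Lemma Pf_G P : good P -> forall i, Pf P i.+1 = FP P i (build P i) ++ EX P i.+1 (FP P i (build P i)).
Proof.
move=> G i; have [w Hw] := K1 P G i.
by rewrite /Pf Sg_succ /FP -Nd_succ /S2 Hw -!catA /= !dropS_cat ?(G.1 _).1 // -!catA.
Qed.

Lemma half_idx (a : cantor) k : (a k + (idx a k).*2)./2 = idx a k.
Proof. exact: half_bit_double. Qed.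

Lemma odd_idx (a : cantor) k : odd (a k + (idx a k).*2) = a k.
Proof. by rewrite oddD odd_double addbF oddb. Qed.

Lemma Dp_idx P a k : Dp P (idx a k) = k.
Proof. elim: k => [//|k IH]; by rewrite /= Dp_succ half_idx IH. Qed.


Lemma idx_le (a : cantor) k : idx a k <= a k + (idx a k).*2.
Proof. rewrite -addnn addnA; apply: leq_addl. Qed.

Lemma idx_ge a k : k <= idx a k.
Proof. elim: k => [//|k IH] /=; rewrite ltnS; apply: leq_trans IH _; exact: idx_le. Qed.

Lemma Nd_idx P a k : Nd P (idx a k.+1) =
  if a k then QF P (phi0 k) (Nd P (idx a k)) (drop (Nd P (idx a k)).+1 (Sg P (a k + (idx a k).*2)))
  else Nd P (idx a k).
Proof. rewrite /= Nd_succ S1_eq /= half_idx odd_idx Dp_idx. by case: (a k). Qed.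

Lemma Pf_chain P a : good P -> forall k, exists w, Pf P (idx a k.+1) = Pf P (idx a k) ++ w.
Proof. move=> G k; have [w Hw] := Pf_ext P G (a k + (idx a k).*2). by exists w; rewrite /= Hw half_idx. Qed.

Lemma Pf_chain_size P a : good P -> forall k, k < size (Pf P (idx a k)).
Proof. move=> G k; rewrite Pf_size //; apply: leq_trans (Sg_size _ _); rewrite ltnS idx_ge //. Qed.

Definition NN P a k := Nd P (idx a k).

Lemma N_step P a : good P -> forall k,
  (NN P a k.+1 = NN P a k /\ a k = false) \/
  (a k = true /\ NN P a k < NN P a k.+1 /\ phi0 (NN P a k.+1).-1 = phi0 k /\
   (exists w, ps P (NN P a k.+1) = ps P (NN P a k) ++ false :: w /\
              pt P (NN P a k.+1) = pt P (NN P a k) ++ true :: w) /\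
   size (Sg P (idx a k)) <= NN P a k.+1).
Proof.
move=> G k; have [Hsz HQ] := G.
rewrite /NN Nd_idx; case Ha: (a k); last by left.
right; split=> //.
set i := (true + (idx a k).*2).
set u := drop (Nd P (idx a k)).+1 (Sg P i).
have [E1 [E2 E3]] := HQ (phi0 k) (Nd P (idx a k)) u.
have [w Hw] := Kinv P G (idx a k).
have Hle : idx a k <= i by have := idx_le a k; rewrite Ha.
have [w' Hw'] := Sg_mono P (idx a k) i Hle.
have Hu : Sg P i = ps P (Nd P (idx a k)) ++ false :: u.
  by rewrite /u Hw' Hw -catA /= dropS_cat ?(Hsz _).1.
have Hs : size (ps P (QF P (phi0 k) (Nd P (idx a k)) u)) = size (Sg P i ++ VF P (phi0 k) (Nd P (idx a k)) u).
  by rewrite E1 Hu -catA.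
rewrite (Hsz _).1 in Hs.
split; last split; last split.
- rewrite Hs size_cat Hu size_cat (Hsz _).1 /=. lia.
- exact: E3.
- by exists (u ++ VF P (phi0 k) (Nd P (idx a k)) u).
- rewrite Hs size_cat Hw' size_cat. lia.
Qed.

Lemma N_mono P a : good P -> forall k k', k <= k' -> NN P a k <= NN P a k'.
Proof.
move=> G k k' /subnK <-; elim: (k' - k) => [//|d IH].
apply: leq_trans IH _; rewrite addSn.
by case: (N_step P a G (d + k)) => [[-> _]|[_ [H _]]] //; apply: ltnW.
Qed.

Lemma N0 P a : NN P a 0 = 0.
Proof. by []. Qed.

Lemma DIFF P a : good P -> forall k j, j < NN P a k ->
  ((nth false (ps P (NN P a k)) j != nth false (pt P (NN P a k)) j) = true <->
   exists k', k' <= k /\ NN P a k' = j).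
Proof.
move=> G; elim=> [|k IH] j Hj; first by rewrite N0 in Hj.
case: (N_step P a G k) => [[E _]|[_ [Hlt [_ [[w [E1 E2]] _]]]]].
  rewrite E in Hj *; rewrite IH //; split; move=> [k' [H1 H2]].
    by exists k'; split => //; apply: leqW.
  exists k'; split => //. move: H1; rewrite leq_eqVlt => /orP [/eqP Hk|]; last by [].
  by move: H2; rewrite Hk E => H2; move: Hj; rewrite H2 ltnn.
rewrite E1 E2 !nth_cat !(G.1 _).1 (G.1 _).2.
have RHS : (exists k', k' <= k.+1 /\ NN P a k' = j) <-> (exists k', k' <= k /\ NN P a k' = j).
  split; move=> [k' [H1 H2]]; last by exists k'; split => //; apply: leqW.
  exists k'; split => //. move: H1; rewrite leq_eqVlt => /orP [/eqP Hk|]; last by [].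
  by move: Hj; rewrite -H2 Hk ltnn.
rewrite RHS.
case: (ltngtP j (NN P a k)) => Hjk.
- by apply: IH.
- case E: (j - NN P a k) => [|d]; first by move: Hjk; rewrite -subn_gt0 E.
  rewrite /= eqxx; split=> // [[k' [H1 H2]]].
  have := N_mono P a G _ _ H1; rewrite H2 => H3; move: Hjk; by rewrite ltnNge H3.
- rewrite Hjk subnn /=; split=> // _; by exists k.
Qed.

Definition A0 P : cantor := fun x => nth false (Sg P x) x.
Definition Fa P (a : cantor) : cantor := fun x => nth false (Pf P (idx a x)) x.

Lemma A0_nth P K x : x < size (Sg P K) -> A0 P x = nth false (Sg P K) x.
Proof. move=> H; rewrite /A0; symmetry; apply: chain_nth => //; [exact: Sg_ext|exact: Sg_size]. Qed.

Lemma Fa_nth P a : good P -> forall K x, x < size (Pf P (idx a K)) ->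
  Fa P a x = nth false (Pf P (idx a K)) x.
Proof.
move=> G K x H; rewrite /Fa; symmetry.
apply: (chain_nth (fun k => Pf P (idx a k))) => //; [exact: Pf_chain|exact: Pf_chain_size].
Qed.

Lemma Dchar P a : good P -> forall K x, x < size (Sg P (idx a K)) ->
  (symdiff (A0 P) (Fa P a) x = true <-> exists k', k' <= K /\ NN P a k' = x).
Proof.
move=> G K x Hx; rewrite /symdiff (A0_nth P _ _ Hx) (Fa_nth P a G K); last by rewrite Pf_size.
have [w Hw] := Kinv P G (idx a K).
have Hp : Pf P (idx a K) = pt P (NN P a K) ++ true :: w.
  by rewrite /Pf Hw dropS_cat ?(G.1 _).1.
rewrite Hp Hw -/(NN P a K) !nth_cat (G.1 _).1 (G.1 _).2.
case: (ltngtP x (NN P a K)) => Hjk.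
- exact: DIFF.
- case E: (x - NN P a K) => [|d]; first by move: Hjk; rewrite -subn_gt0 E.
  rewrite /= eqxx; split=> // [[k' [H1 H2]]].
  have := N_mono P a G _ _ H1; rewrite H2 => H3; move: Hjk; by rewrite ltnNge H3.
- rewrite Hjk subnn /=; split=> // _; by exists K.
Qed.

Lemma ORIG P a : good P -> forall k' x, NN P a k' = x -> 0 < x ->
  exists k, k < k' /\ a k = true /\ phi0 x.-1 = phi0 k.
Proof.
move=> G; elim=> [|k IH] x Hx Hx0; first by move: Hx0; rewrite -Hx N0.
case: (N_step P a G k) => [[E _]|[Ha [_ [Hph _]]]].
  have [k0 [H1 H2]] := IH x (esym (etrans (esym Hx) E)) Hx0. by exists k0; split => //; apply: leqW.
by exists k; split => //; split => //; rewrite -Hx.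
Qed.

Lemma agree_mono a b r r' : r' <= r -> agree a b r -> agree a b r'.
Proof. by move=> H Hab i Hi; apply: Hab; apply: leq_trans Hi H. Qed.

Arguments agree_mono [a b r r'].

Lemma idx_agree a b n : agree a b n -> forall k, k <= n -> idx a k = idx b k.
Proof. move=> H; elim=> [//|k IH] Hk /=. by rewrite IH ?(ltnW Hk) // H. Qed.

Lemma restr_agree a b r : restr b r = restr a r -> agree a b r.
Proof.
move=> H i Hi. have := congr1 (fun s => nth false s i) H. by rewrite !nth_mkseq.
Qed.

Lemma take_restr (a : cantor) n r : take n (restr a (n + r)) = restr a n.
Proof.
have Hs : size (take n (restr a (n + r))) = n by rewrite size_take size_mkseq; case: ltnP => //; lia.
apply: (@eq_from_nth _ false); first by rewrite Hs size_mkseq.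
move=> i; rewrite Hs => Hin.
by rewrite nth_take // !nth_mkseq //; lia.
Qed.

Arguments restr_agree [a b r].

Lemma pcode_hit tt m q : phi0 q = phi0 (pcode (rcons tt m)) -> exists m', pcode (rcons tt m') = q.
Proof.
case: tt => [|h r] H; first by exists q.
exists (phi q).2; rewrite pcode_rcons.
have E : pcode (h :: r) = phi0 q by rewrite H pcode_rcons phi0_pair.
by rewrite E pair_phi'.
Qed.

Theorem lemma3p4 (G : cantor -> Prop) (s t : nat -> seq bool) :
  dense G -> Gdelta G -> is_test s t ->
  exists (a0 : cantor) (f : cantor -> cantor),
    G a0 /\ (forall a, G (f a)) /\ continuous_map f /\
    forall a : cantor,
      in_body s t a0 (f a) /\
      forall (tt : seq nat) (m : nat),
        (a (pcode (rcons tt m)) = true ->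
           exists m', symdiff a0 (f a) (pcode (rcons tt m')).+1 = true) /\
        (symdiff a0 (f a) (pcode (rcons tt m)).+1 = true ->
           exists m', a (pcode (rcons tt m')) = true).
Proof.
move=> Hd [U [HU HG]] [Ta [Tb Tc]].
pose V n b := forall m, m <= n -> U m b.
have Vopen : forall n a, V n a -> exists r, forall b, agree a b r -> V n b.
  elim=> [|n IH] a Ha.
    have [r Hr] := HU 0 a (Ha 0 (leqnn 0)).
    by exists r => b Hb m; rewrite leqn0 => /eqP ->; apply: Hr.
  have [r1 H1] := IH a (fun m Hm => Ha m (leqW Hm)).
  have [r2 H2] := HU n.+1 a (Ha _ (leqnn _)).
  exists (maxn r1 r2) => b Hb m; rewrite leq_eqVlt => /orP [/eqP ->|Hm].
    by apply: H2; apply: agree_mono Hb; apply: leq_maxr.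
  by apply: (H1 b) => //; apply: agree_mono Hb; apply: leq_maxl.
have HEX : forall n (rho : seq bool), exists w : seq bool, forall b,
    restr b (size rho + size w) = rho ++ w -> V n b.
  move=> n rho; have [a [Ga Ha]] := Hd rho.
  have [r Hr] := Vopen n a (fun m _ => (HG a).1 Ga m).
  exists (drop (size rho) (restr a (size rho + r))).
  have Hs : size (drop (size rho) (restr a (size rho + r))) = r.
    by rewrite size_drop size_mkseq addKn.
  have Hc : rho ++ drop (size rho) (restr a (size rho + r)) = restr a (size rho + r).
    by rewrite -{1}Ha -(take_restr a (size rho) r) cat_take_drop.
  rewrite Hs Hc => b Hb; apply: Hr; apply: agree_mono (restr_agree Hb); apply: leq_addl.
pose EXf n rho := proj1_sig (constructive_indefinite_description _ (HEX n rho)).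
have EXP : forall n rho b, restr b (size rho + size (EXf n rho)) = rho ++ EXf n rho -> V n b.
  by move=> n rho; rewrite /EXf; case: (constructive_indefinite_description _ _).
have Hvq : forall m p u, exists vq : seq bool * nat,
    s vq.2 = s p ++ false :: u ++ vq.1 /\ t vq.2 = t p ++ true :: u ++ vq.1 /\ phi0 vq.2.-1 = m.
  move=> m p u; have [v [q [E1 [E2 E3]]]] := Tb m p u.
  exists (v, q) => /=; split => //; split => //.
  by rewrite -E3 -E2 (Ta q).2 subn1.
pose VQ m p u := proj1_sig (constructive_indefinite_description _ (Hvq m p u)).
have VQP : forall m p u, s (VQ m p u).2 = s p ++ false :: u ++ (VQ m p u).1 /\
    t (VQ m p u).2 = t p ++ true :: u ++ (VQ m p u).1 /\ phi0 (VQ m p u).2.-1 = m.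
  by move=> m p u; rewrite /VQ; case: (constructive_indefinite_description _ _).
pose P := Prm s t (fun m p u => (VQ m p u).1) (fun m p u => (VQ m p u).2) EXf.
have GP : good P by split.
have Gin : forall b, (forall n, V n b) -> G b.
  by move=> b Hb; apply/HG => n; apply: (Hb n n).
exists (A0 P), (Fa P).
split; [|split; [|split]].
- apply: Gin => n.
  have Hv : V n.+1 (A0 P).
    apply: (EXP n.+1 (S1 P n (build P n)).1).
    rewrite /A0 (chain_restr (Sg P) (Sg_ext P) (Sg_size P) n.+1).
      by rewrite Sg_succ /S2 -size_cat take_size_cat.
    by rewrite Sg_succ /S2 !size_cat leq_addr.
  by move=> m Hm; apply: Hv; apply: leqW.
- move=> a; apply: Gin => n.
  set i := a n + (idx a n).*2.
  have Hv : V i.+1 (Fa P a).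
    apply: (EXP i.+1 (FP P i (build P i))).
    rewrite /Fa (chain_restr (fun k => Pf P (idx a k)) (Pf_chain P a GP) (Pf_chain_size P a GP) n.+1) /=.
      by rewrite -/i (Pf_G P GP i) /= -size_cat take_size.
    by rewrite -/i (Pf_G P GP i) /= !size_cat.
  move=> m Hm; apply: Hv; apply: leq_trans Hm _.
  by have := idx_ge a n.+1; rewrite /= -/i; apply: ltnW.
- move=> a n; exists n => b Hb x Hx.
  by rewrite /Fa (idx_agree _ _ _ Hb _ (ltnW Hx)).
move=> a; split.
  move=> r; rewrite /A0 /Fa.
  have Hr : r <= size (Sg P (idx a r)).
    by apply: ltnW; apply: leq_ltn_trans (Sg_size P _); apply: idx_ge.
  rewrite (chain_restr (Sg P) (Sg_ext P) (Sg_size P) (idx a r)) //.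
  rewrite (chain_restr (fun k => Pf P (idx a k)) (Pf_chain P a GP) (Pf_chain_size P a GP) r) /=; last by rewrite Pf_size.
  have [w Hw] := Kinv P GP (idx a r).
  rewrite /Pf Hw dropS_cat ?(GP.1 _).1 //.
  exact: tree_take.
have Hsz : forall x, x < size (Sg P (idx a x)).
  by move=> x; apply: leq_ltn_trans (Sg_size P _); apply: idx_ge.
move=> tt m; split.
  move=> Ha.
  case: (N_step P a GP (pcode (rcons tt m))) => [[_ Hf]|[_ [Hlt [Hph _]]]].
    by rewrite Hf in Ha.
  move: Hlt Hph; set q := NN P a (pcode (rcons tt m)).+1 => Hlt Hph.
  have Hq0 : 0 < q by apply: leq_ltn_trans Hlt.
  have HD : symdiff (A0 P) (Fa P a) q = true.
    apply/(Dchar P a GP (q + (pcode (rcons tt m)).+1) q).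
      apply: leq_trans (Hsz _); rewrite ltnS; apply: (@leq_trans (q + (pcode (rcons tt m)).+1)); first exact: leq_addr.
      by [].
    by exists (pcode (rcons tt m)).+1; split => //; apply: leq_addl.
  have [m' Hm'] := pcode_hit tt m q.-1 Hph.
  by exists m'; rewrite Hm' prednK.
move=> HD.
have [k' [_ Hk']] := (Dchar P a GP _ _ (Hsz _)).1 HD.
have [k [_ [Hak Hph]]] := ORIG P a GP k' _ Hk' (ltn0Sn _).
move: Hph; rewrite /= => Hph.
have [m' Hm'] := pcode_hit tt m k (esym Hph).
by exists m'; rewrite Hm'.
Qed.
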